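(* Let $N$ be a complex two-step nilpotent Lie algebra whose center has dimension $p=2$, with $q=\dim N-2$, and suppose the marginal rank of $N$ equals $q$. Let $(X,I)$ be a basis of $N$, $\mathcal A=\mathcal A(X,I)$, and let $\mathcal A_{\cdot\cdot i}\in\mathbb C^{q\times q}$ be the slice of $\mathcal A$ obtained by fixing the third index to $i$, $i=1,2$. If \[ \operatorname{rank}(\mathcal A_{\cdot\cdot 1})+\operatorname{rank}(\mathcal A_{\cdot\cdot 2})>q, \] then $\mathcal A$ is not in block diagonal format $(S,T)$ for any nonempty proper subset $S\subset\{1,\dots,q\}$ (and any $T\subseteq\{1,2\}$). Consequently, if this inequality holds for the representation tensor of every basis $(X,I)$ of $N$, then $N$ is indecomposable.
   Context: A basis $(X,I)$ of $N$ consists of $I=\{\mathbf y_1,\dots,\mathbf y_p\}$, a basis of the center of $N$, and $X=\{\mathbf x_1,\dots,\mathbf x_q\}$ such that $X\cup I$ is a basis of $N$. Its representation tensor $\mathcal A(X,I)=(a_{ijk})\in\mathbb C^{q\times q\times p}$ is defined by $a_{ijk}=\alpha_k$ where $[\mathbf x_i,\mathbf x_j]=\sum_{s=1}^p\alpha_s\mathbf y_s$. A tensor is in block diagonal format $(S,T)$ if its only possibly nonzero entries occur at $(i,j,k)\in (S\times S\times T)\cup(S^\complement\times S^\complement\times T^\complement)$. The marginal rank of $N$ is the rank of the $q\times pq$ matrix $[A_1,\dots,A_p]$, where $A_k$ is the $k$-th slice $(a_{ijk})_{i,j}$ of $\mathcal A(X,I)$ (independent of the basis). A Lie algebra is indecomposable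 if it is not a direct sum of two nonzero ideals. *)

(* Defs.v *)
(* Complex numbers are R[i] (mathcomp-real-closed) for a
   real-number type R : realType (any realType is the real field). *)
From HB Require Import structures.
From mathcomp Require Import all_boot all_order all_algebra.
From mathcomp Require Import complex.
From mathcomp Require Import reals.
Set Implicit Arguments. Unset Strict Implicit. Unset Printing Implicit Defensive.
Import Order.TTheory GRing.Theory Num.Theory.
Local Open Scope ring_scope.

Section LieDefs.
Variable (F : fieldType) (V : vectType F).

Definition is_lie_bracket (br : V -> V -> V) : Prop :=
  [/\ forall a x y z, br (a *: x + y) z = a *: br x z + br y z,
      forall a x y z, br z (a *: x + y) = a *: br z x + br z y,
      forall x, br x x = 0 &
      forall x y z, br x (br y z) + br y (br z x) + br z (br x y) = 0].

Definition two_step_nilpotent (br : V -> V -> V) : Prop :=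
  (forall x y z, br (br x y) z = 0) /\ exists x y, br x y != 0.

Definition central (br : V -> V -> V) (z : V) : Prop := forall x, br x z = 0.

Definition center_basis (br : V -> V -> V) (I : seq V) : Prop :=
  [/\ free I, (forall y, y \in I -> central br y) &
      (forall z, central br z -> z \in <<I>>%VS)].

Definition center_dim (br : V -> V -> V) (p : nat) : Prop :=
  exists I : p.-tuple V, center_basis br I.

Definition lie_basis (br : V -> V -> V) q p (X : q.-tuple V) (I : p.-tuple V)
  : Prop := center_basis br I /\ basis_of fullv (X ++ I).

Definition rep_tensor (br : V -> V -> V) q p (X : q.-tuple V) (I : p.-tuple V)
  (i j : 'I_q) (k : 'I_p) : F := coord I k (br (tnth X i) (tnth X j)).

Definition slice (br : V -> V -> V) q p (X : q.-tuple V) (I : p.-tuple V)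
  (k : 'I_p) : 'M[F]_q := \matrix_(i, j) rep_tensor br X I i j k.

Definition marginal_mx (br : V -> V -> V) q p (X : q.-tuple V) (I : p.-tuple V)
  : 'M[F]_(q, \sum_(k < p) q) := \mxrow_(k < p) slice br X I k.

(* marginal rank of N equals r (computed in some basis; it is basis-independent) *)
Definition has_marginal_rank (br : V -> V -> V) q p (r : nat) : Prop :=
  exists (X : q.-tuple V) (I : p.-tuple V),
    lie_basis br X I /\ \rank (marginal_mx br X I) = r.

Definition block_diag_format q p (A : 'I_q -> 'I_q -> 'I_p -> F)
  (S : {set 'I_q}) (T : {set 'I_p}) : Prop :=
  forall i j k, A i j k != 0 ->
    [&& i \in S, j \in S & k \in T] || [&& i \notin S, j \notin S & k \notin T].

Definition is_ideal (br : V -> V -> V) (U : {vspace V}) : Prop :=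
  forall x u, u \in U -> br x u \in U.

Definition indecomposable (br : V -> V -> V) : Prop :=
  ~ exists U W : {vspace V},
      [/\ is_ideal br U, is_ideal br W, U != 0%VS /\ W != 0%VS,
          (U :&: W = 0)%VS & (U + W = fullv)%VS].
End LieDefs.

(* Main.v *)
Require Import Defs.
From HB Require Import structures.
From mathcomp Require Import all_boot all_order all_algebra.
From mathcomp Require Import complex.
From mathcomp Require Import reals.
From mathcomp Require Import zify.
Import Order.TTheory GRing.Theory Num.Theory.
Local Open Scope ring_scope.

Module Helpers.
Set Implicit Arguments. Unset Strict Implicit. Unset Printing Implicit Defensive.

Lemma rank_split (F : fieldType) q (M0 M1 : 'M[F]_q) (P : pred 'I_q) :
  (forall i j, ~~ P i -> M0 i j = 0) -> (forall i j, P i -> M1 i j = 0) ->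
  (\rank M0 + \rank M1 <= q)%N.
Proof.
move=> H0 H1.
pose D : 'M[F]_q := diag_mx (\row_i (P i)%:R).
pose E : 'M[F]_q := diag_mx (\row_i (~~ P i)%:R).
have eM0 : M0 = D *m M0.
  apply/matrixP=> i j; rewrite mul_diag_mx !mxE.
  by case: (boolP (P i)) => Pi; rewrite ?mul1r // H0 // mulr0.
have eM1 : M1 = E *m M1.
  apply/matrixP=> i j; rewrite mul_diag_mx !mxE.
  by case: (boolP (P i)) => Pi /=; rewrite ?mul1r // H1 // mulr0.
have ED : E *m D = 0.
  rewrite mulmx_diag; apply/matrixP=> i j; rewrite !mxE.
  by case: (P i); rewrite /= ?mul0r ?mulr0 ?mul0rn.
have r0 : (\rank M0 <= \rank D)%N by rewrite eM0 mxrankM_maxl.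
have r1 : (\rank M1 <= q - \rank D)%N.
  rewrite eM1. rewrite -(mxrank_ker D). apply: leq_trans (mxrankM_maxl E M1) _.
  by apply: mxrankS; apply/sub_kermxP.
have rq : (\rank D <= q)%N by apply: rank_leq_row.
by apply: leq_trans (leq_add r0 r1) _; rewrite (subnKC rq).
Qed.


Section Br.
Variables (F : fieldType) (V : vectType F) (br : V -> V -> V).
Hypothesis Hbr : is_lie_bracket br.

Lemma br0l z : br 0 z = 0.
Proof. by case: Hbr => H _ _ _; have := H (-1) 0 0 z; rewrite scaler0 addr0 scaleN1r addNr. Qed.
Lemma br0r z : br z 0 = 0.
Proof. by case: Hbr => _ H _ _; have := H (-1) 0 0 z; rewrite scaler0 addr0 scaleN1r addNr. Qed.
Lemma brDl x y z : br (x + y) z = br x z + br y z.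
Proof. by case: Hbr => H _ _ _; have := H 1 x y z; rewrite !scale1r. Qed.
Lemma brDr x y z : br z (x + y) = br z x + br z y.
Proof. by case: Hbr => _ H _ _; have := H 1 x y z; rewrite !scale1r. Qed.
Lemma brZl a x z : br (a *: x) z = a *: br x z.
Proof. by case: Hbr => H _ _ _; have := H a x 0 z; rewrite !addr0 br0l addr0. Qed.
Lemma brZr a x z : br z (a *: x) = a *: br z x.
Proof. by case: Hbr => _ H _ _; have := H a x 0 z; rewrite !addr0 br0r addr0. Qed.
Lemma brN x y : br x y = - br y x.
Proof.
case: Hbr => _ _ H _; apply/eqP; rewrite -addr_eq0.
have := H (x + y); rewrite brDl !brDr !H add0r addr0 => ->; by [].
Qed.
Lemma br_sumr n (f : 'I_n -> V) x : br x (\sum_i f i) = \sum_i br x (f i).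
Proof. exact: (big_morph (br x) (fun a b => brDr a b x) (br0r x)). Qed.

Lemma central_span n (I : n.-tuple V) z :
  (forall y, y \in I -> central br y) -> z \in <<I>>%VS -> central br z.
Proof.
move=> HI /coord_span -> x; rewrite br_sumr big1 // => i _.
by rewrite brZr HI ?scaler0 // mem_nth // size_tuple.
Qed.

Lemma central_iff n (I : n.-tuple V) z : center_basis br I ->
  (central br z <-> z \in <<I>>%VS).
Proof. by case=> _ HI H; split; [apply: H | apply: central_span]. Qed.

Lemma br_central x y : two_step_nilpotent br -> central br (br x y).
Proof. by case=> H _ z; rewrite brN H oppr0. Qed.
End Br.


Section P1.
Variables (F : fieldType) (V : vectType F) (br : V -> V -> V).
Hypothesis Hbr : is_lie_bracket br.
Hypothesis Hnil : two_step_nilpotent br.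

Lemma zero_coord_br p (I : p.-tuple V) x y :
  center_basis br I -> (forall k, coord I k (br x y) = 0) -> br x y = 0.
Proof.
move=> cI Hk; have /(central_iff Hbr _ cI) := br_central Hbr x y Hnil.
by move/coord_span ->; rewrite big1 // => k _; rewrite Hk scale0r.
Qed.

Lemma zero_row_false q p (X : q.-tuple V) (I : p.-tuple V) i :
  lie_basis br X I -> (forall j k, rep_tensor br X I i j k = 0) -> False.
Proof.
case=> cI bXI Hz.
have Hr j : br (tnth X i) (tnth X j) = 0 by apply: (zero_coord_br cI) => k; apply: Hz.
have cx : central br (tnth X i).
  move=> x; rewrite brN //; apply/eqP; rewrite oppr_eq0; apply/eqP.
  have : x \in <<X ++ I>>%VS by rewrite (span_basis bXI) memvf.
  rewrite span_cat => /memv_addP [u /coord_span -> [v vI ->]].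
  rewrite brDr // br_sumr // big1 ?add0r; last first.
    by move=> j _; rewrite brZr // -(tnth_nth 0) Hr scaler0.
  by case: cI => _ HI _; rewrite (central_span Hbr HI vI).
have xI : tnth X i \in <<I>>%VS by case: cI => _ _; apply.
have := basis_free bXI; rewrite cat_free => /and3P [fX _ /directv_addP dXI].
have : tnth X i \in (<<X>> :&: <<I>>)%VS by rewrite memv_cap xI memv_span ?mem_tnth.
by rewrite dXI memv0 => /eqP x0; move: (free_not0 fX (mem_tnth i X)); rewrite x0 eqxx.
Qed.
End P1.


Section P1b.
Variables (F : fieldType) (V : vectType F) (br : V -> V -> V).
Hypothesis Hbr : is_lie_bracket br.
Hypothesis Hnil : two_step_nilpotent br.

Lemma I2_cases (k : 'I_2) : k = ord0 \/ k = ord_max.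
Proof. by case: k => [[|[|//]]] H; [left|right]; apply/val_inj. Qed.

Lemma part1 q (X : q.-tuple V) (I : 2.-tuple V) : lie_basis br X I ->
     (q < \rank (slice br X I ord0) + \rank (slice br X I ord_max))%N ->
     forall (S : {set 'I_q}) (T : {set 'I_2}),
       S != set0 -> S != setT ->
       ~ block_diag_format (rep_tensor br X I) S T.
Proof.
move=> lb Hr S T S0 ST Hf.
have [i iS] : exists i, i \in S.
  by case/set0Pn: S0 => i; exists i.
have [i' i'S] : exists i, i \notin S.
  have : ~~ [forall i, i \in S].
    by apply: contra ST => /forallP H; apply/eqP/setP => j; rewrite inE H.
  by case/forallPn => j; exists j.
have rowz i0 (HT : forall j k, rep_tensor br X I i0 j k != 0 -> false) : False.
  apply: (zero_row_false Hbr Hnil (i:=i0) lb) => j k; apply/eqP; case: eqP => // /eqP h; by have := HT _ _ h.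
have slE k a b : slice br X I k a b = rep_tensor br X I a b k by rewrite mxE.
case: (boolP (ord0 \in T)) => H0; case: (boolP (ord_max \in T)) => H1.
- have allT k : k \in T by case: (I2_cases k) => ->.
  apply: (rowz i') => j k /Hf; rewrite allT (negbTE i'S) /=.
  by rewrite andbF.
- move: Hr; apply/negP; rewrite -leqNgt.
  apply: (@rank_split _ _ _ _ [pred a | a \in S]) => a b /= Ha; rewrite slE; apply/eqP; case: eqP => // /eqP /Hf.
    by rewrite (negbTE Ha) /= H0 andbF.
  by rewrite Ha /= (negbTE H1) !andbF.
- move: Hr; apply/negP; rewrite -leqNgt.
  apply: (@rank_split _ _ _ _ [pred a | a \notin S]) => a b /= Ha; rewrite slE; apply/eqP; case: eqP => // /eqP /Hf.
    by rewrite negbK in Ha; rewrite Ha /= (negbTE H0) !andbF.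
  by rewrite (negbTE Ha) /= H1 andbF.
- have allT k : k \notin T by case: (I2_cases k) => ->.
  apply: (rowz i) => j k /Hf; rewrite (negbTE (allT k)) iS /= !andbF.
  by [].
Qed.
End P1b.


Section P2.
Variables (F : fieldType) (V : vectType F) (br : V -> V -> V).
Hypothesis Hbr : is_lie_bracket br.
Hypothesis Hnil : two_step_nilpotent br.
Variable I0 : 2.-tuple V.
Hypothesis cI0 : center_basis br I0.
Let Zs := <<I0>>%VS.

Lemma dimZs : \dim Zs = 2%N.
Proof. by case: cI0 => /eqnP; rewrite size_tuple. Qed.

Section UW.
Variables U W : {vspace V}.
Hypotheses (iU : is_ideal br U) (iW : is_ideal br W) (U0 : U != 0%VS)
  (dUW : (U :&: W = 0)%VS) (sUW : (U + W = fullv)%VS).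

Lemma idealL x u : u \in U -> br u x \in U.
Proof. by move=> uU; rewrite brN // memvN iU. Qed.

Lemma crossUW u w : u \in U -> w \in W -> br u w = 0.
Proof.
move=> uU wW; apply/eqP; rewrite -memv0 -dUW memv_cap iW // andbT.
by apply: idealL.
Qed.

Lemma crossWU u w : u \in U -> w \in W -> br w u = 0.
Proof. by move=> uU wW; rewrite brN // crossUW // oppr0. Qed.

Lemma decomp x : exists2 u, u \in U & exists2 w, w \in W & x = u + w.
Proof. by apply/memv_addP; rewrite sUW memvf. Qed.

Lemma Zu_ne0 : (U :&: Zs)%VS != 0%VS.
Proof.
apply: contra U0 => /eqP Z0; rewrite -subv0 -Z0; apply/subvP => u uU.
rewrite memv_cap uU /=; apply/(central_iff Hbr _ cI0) => x.
have [xu xuU [xw xwW ->]] := decomp x.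
rewrite brDl // (crossWU uU xwW) addr0.
have : br xu u \in (U :&: Zs)%VS.
  rewrite memv_cap iU //=; apply/(central_iff Hbr _ cI0); exact: br_central.
by rewrite Z0 memv0 => /eqP.
Qed.

Lemma Zs_split z : z \in Zs -> exists2 u, u \in (U :&: Zs)%VS & exists2 w, w \in (W :&: Zs)%VS & z = u + w.
Proof.
move=> zZ; have [u uU [w wW ez]] := decomp z.
have cz := proj2 (central_iff Hbr z cI0) zZ.
exists u; last exists w => //.
  rewrite memv_cap uU /=; apply/(central_iff Hbr _ cI0) => x.
  have [xu xuU [xw xwW ->]] := decomp x.
  rewrite brDl // (crossWU uU xwW) addr0.
  have : br xu z = 0 by apply: cz.
  by rewrite ez brDr // (crossUW xuU wW) addr0.
rewrite memv_cap wW /=; apply/(central_iff Hbr _ cI0) => x.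
have [xu xuU [xw xwW ->]] := decomp x.
rewrite brDl // (crossUW xuU wW) add0r.
have : br xw z = 0 by apply: cz.
by rewrite ez brDr // (crossWU uU xwW) add0r.
Qed.
End UW.
End P2.


Section P3.
Variables (F : fieldType) (V : vectType F) (br : V -> V -> V).
Hypothesis Hbr : is_lie_bracket br.
Hypothesis Hnil : two_step_nilpotent br.
Variable I0 : 2.-tuple V.
Hypothesis cI0 : center_basis br I0.
Let Zs := <<I0>>%VS.
Variables U W : {vspace V}.
Hypotheses (iU : is_ideal br U) (iW : is_ideal br W) (U0 : U != 0%VS) (W0 : W != 0%VS)
  (dUW : (U :&: W = 0)%VS) (sUW : (U + W = fullv)%VS).
Variable q : nat.
Hypothesis dimV : \dim (fullv : {vspace V}) = (q + 2)%N.

Lemma construct : exists (X : q.-tuple V) (I : 2.-tuple V), lie_basis br X I /\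
   (\rank (slice br X I ord0) + \rank (slice br X I ord_max) <= q)%N.
Proof.
pose Zu := (U :&: Zs)%VS; pose Zw := (W :&: Zs)%VS.
have hu : Zu != 0%VS := Zu_ne0 Hbr Hnil cI0 iU iW U0 dUW sUW.
have hw : Zw != 0%VS.
  by apply: (Zu_ne0 Hbr Hnil cI0 iW iU W0); [rewrite capvC | rewrite addvC].
have dZ : (Zu :&: Zw = 0)%VS.
  by apply/eqP; rewrite -subv0 -dUW capvS ?capvSl.
have eZ : (Zu + Zw = Zs)%VS.
  apply/eqP; rewrite eqEsubv subv_add !capvSr /=; apply/subvP => z zZ.
  have [u uZ [w wZ ->]] := Zs_split Hbr cI0 iU iW dUW sUW zZ.
  by apply/memv_addP; exists u => //; exists w.
have d2 : (\dim Zu + \dim Zw = 2)%N by rewrite -dimv_disjoint_sum // eZ (dimZs cI0).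
have du0 : (0 < \dim Zu)%N by rewrite lt0n dimv_eq0.
have dw0 : (0 < \dim Zw)%N by rewrite lt0n dimv_eq0.
have du1 : \dim Zu = 1%N by lia.
have dw1 : \dim Zw = 1%N by lia.
pose zu := vpick Zu; pose zw := vpick Zw.
have eZu : (<[zu]> = Zu)%VS.
  apply/eqP; rewrite eqEdim -memvE memv_pick dim_vline vpick0 hu du1 //.
have eZw : (<[zw]> = Zw)%VS.
  apply/eqP; rewrite eqEdim -memvE memv_pick dim_vline vpick0 hw dw1 //.
pose I := [tuple zu; zw].
have spanI : (<<I>> = Zs)%VS by rewrite /= span_cons span_seq1 eZu eZw eZ.
have bI : basis_of Zs I by rewrite basisEdim spanI subvv size_tuple (dimZs cI0).
have fI : free I := basis_free bI.
have cI : center_basis br I.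
  split => //.
    move=> y yI; apply/(central_iff Hbr _ cI0); rewrite -/Zs -spanI.
    exact: memv_span.
  by move=> z /(central_iff Hbr _ cI0); rewrite -/Zs -spanI.
pose dU := \dim (U :\: Zs); pose dW := \dim (W :\: Zs).
have dimU : \dim U = (dU + 1)%N.
  rewrite -{1}(addv_diff_cap U Zs) dimv_disjoint_sum -/Zu ?du1 //.
  by apply/eqP; rewrite -subv0 -(capv_diff U Zs) capvS ?subvv ?capvSr.
have dimW : \dim W = (dW + 1)%N.
  rewrite -{1}(addv_diff_cap W Zs) dimv_disjoint_sum -/Zw ?dw1 //.
  by apply/eqP; rewrite -subv0 -(capv_diff W Zs) capvS ?subvv ?capvSr.
have dUW' : (dU + dW = q)%N.
  have := dimv_disjoint_sum dUW; rewrite sUW dimV dimU dimW; lia.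
pose XU := vbasis (U :\: Zs); pose XW := vbasis (W :\: Zs).
have hs : size (XU ++ XW) == q by rewrite size_cat !size_tuple dUW'.
pose X := Tuple hs.
have bX : basis_of fullv (X ++ I).
  rewrite basisEdim size_cat !size_tuple dimV leqnn andbT /=.
  rewrite !span_cat (span_basis (vbasisP _)) (span_basis (vbasisP _)) spanI.
  rewrite -sUW subv_add; apply/andP; split.
    rewrite -{1}(addv_diff_cap U Zs) subv_add; apply/andP; split.
      by apply: subv_trans (addvSl _ _); apply: addvSl.
    by apply: subv_trans (addvSr _ _); apply: capvSr.
  rewrite -{1}(addv_diff_cap W Zs) subv_add; apply/andP; split.
    by apply: subv_trans (addvSl _ _); apply: addvSr.
  by apply: subv_trans (addvSr _ _); apply: capvSr.
exists X, I; split; first by [].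
have memXU (a : 'I_q) : (a < dU)%N -> tnth X a \in U.
  move=> Ha; rewrite (tnth_nth 0) /= nth_cat size_tuple Ha.
  apply: (subvP (diffvSl U Zs)); apply: vbasis_mem; apply: mem_nth.
  by rewrite size_tuple.
have memXW (a : 'I_q) : ~~ (a < dU)%N -> tnth X a \in W.
  move=> Ha; rewrite (tnth_nth 0) /= nth_cat size_tuple (negbTE Ha).
  apply: (subvP (diffvSl W Zs)); apply: vbasis_mem; apply: mem_nth.
  rewrite size_tuple; have := ltn_ord a; move: Ha; lia.
have cZ x y : br x y \in Zs by apply/(central_iff Hbr _ cI0); apply: br_central.
apply: (@rank_split _ _ _ _ [pred a : 'I_q | (a < dU)%N]) => a b /= Ha; rewrite mxE /rep_tensor.
  have : br (tnth X a) (tnth X b) \in Zw by rewrite memv_cap cZ andbT idealL // memXW.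
  rewrite -eZw => /vlineP [c ->]; rewrite linearZ /=.
  by have := coord_free ord_max ord0 fI; rewrite /= => ->; rewrite mulr0.
have : br (tnth X a) (tnth X b) \in Zu by rewrite memv_cap cZ andbT idealL // memXU.
rewrite -eZu => /vlineP [c ->]; rewrite linearZ /=.
by have := coord_free ord0 ord_max fI; rewrite /= => ->; rewrite mulr0.
Qed.
End P3.

End Helpers.
Import Helpers.

Theorem lemma6 (R : realType) (V : vectType R[i]) (br : V -> V -> V) (q : nat) :
  is_lie_bracket br -> two_step_nilpotent br ->
  center_dim br 2 -> \dim (fullv : {vspace V}) = (q + 2)%N ->
  has_marginal_rank br q 2 q ->
  (forall (X : q.-tuple V) (I : 2.-tuple V), lie_basis br X I ->
     (q < \rank (slice br X I ord0) + \rank (slice br X I ord_max))%N ->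
     forall (S : {set 'I_q}) (T : {set 'I_2}),
       S != set0 -> S != setT ->
       ~ block_diag_format (rep_tensor br X I) S T)
  /\
  ((forall (X : q.-tuple V) (I : 2.-tuple V), lie_basis br X I ->
     (q < \rank (slice br X I ord0) + \rank (slice br X I ord_max))%N) ->
   indecomposable br).
Proof.
move=> Hbr Hnil [I0 cI0] dimV _; split.
  by move=> X I lb; apply: (part1 Hbr Hnil lb).
move=> H [U [W [iU iW [U0 W0] dUW sUW]]].
have [X [I [lb hr]]] := construct Hbr Hnil cI0 iU iW U0 W0 dUW sUW dimV.
by move: (H X I lb); rewrite ltnNge hr.
Qed.
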